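(* Fix $M$, integers $L,l$, and a job set $J$ with $L\ge D(J)$, and let $h$ be a hash function that is $(L,l)$-good for $J$. Then, for any choices of which eligible job to work on and for any greedy-enabled adversary, the algorithm GreedyWeakScheduler run on $J$ with parameters $L,l,h$ completes at least half of the jobs within $2Ll$ time steps.
   Context: Job-shop scheduling with unit jobs: machines $M$; jobs $J$ with sequences $\mathrm{seq}(j)\in M^*$, unique identifiers $\mathrm{ind}(j)\in I=\{1,\dots,|M|^c\}$, positions $\mathrm{pos}(j)_t\in\{0,\dots,\mathrm{len}(\mathrm{seq}(j))\}$ (completed at the last value) and states $\mathrm{state}(j)_t$; $\mathrm{que}(m)_t=\{j:\mathrm{seq}(j)_{\mathrm{pos}(j)_t}=m\}$; each step each machine works on at most one job in its queue, which advances one position. Greedy-enabled: each step, before the algorithm acts, an adversary knowing all positions and states may advance any jobs by arbitrary nonnegative amounts. $D(J)=\max_j\mathrm{len}(\mathrm{seq}(j))$. For $h:M^*\times I\to\{0,\dots,L-1\}$ with $h(j):=h(\mathrm{seq}(j),\mathrm{ind}(j))$: $\mathrm{virt}(j,i)=h(j)+i$ for $i<\mathrm{len}(\mathrm{seq}(j))$ and $\infty$ otherwise; $\mathrm{virt}(j)_t=\mathrm{virt}(j,\mathrm{pos}(j)_t)$. GreedyWeakScheduler$(m,L,l,h,t)$ at time $t$ (counted from the start of the subroutine): if $t=0$ set the states of all jobs in $\mathrm{que}(m)_t$ to $0$; let $T=\lfloor t/l\rfloor$, $Q=\{j\in\mathrm{que}(m)_t:\mathrm{virt}(j)_t=T,\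 \mathrm{state}(j)_t=0\}$; if $t\equiv0\pmod l$ and $|Q|>l$, set the states of all jobs in $Q$ to $1$; if $0<|Q|\le l$ work on an arbitrary $j\in Q$ (this is the choice of eligible job), else do nothing. Bad pattern (for fixed $M,L,l,J$): a collection of sets $B_{T,m}$, for $0\le T<2L$ and $m\in M$, of (job, sequence position) pairs such that $\mathrm{seq}(j)_i=m$ for all $(j,i)\in B_{T,m}$; each $j\in J$ appears at most once in $\bigsqcup B_{T,m}$; each $|B_{T,m}|\in\{0\}\cup(l,|J|]$; and $\sum|B_{T,m}|>|J|/2$. The bad pattern occurs for $h$ if $T=\mathrm{virt}(j,i)$ for all $(T,m)$ and all $(j,i)\in B_{T,m}$. The hash function $h$ is $(L,l)$-good for $J$ if no bad pattern (for $M,L,l,J$) occurs for $h$. *)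

(* Defs.v *)
From mathcomp Require Import all_boot.
Set Implicit Arguments.
Unset Strict Implicit.
Unset Printing Implicit Defensive.

Section Sched.
(* M : machines; Job : the job set J; sq j = seq(j); ind j = ind(j) in
   I = {1,...,|M|^c}, represented 0-based as 'I_(#|M|^c);
   h : M^* x I -> {0,...,L-1}. *)
Variables (M Job : finType) (c : nat) (sq : Job -> seq M)
  (ind : Job -> 'I_(#|M| ^ c)) (L l : nat)
  (h : seq M -> 'I_(#|M| ^ c) -> 'I_L).

Definition hj (j : Job) : nat := h (sq j) (ind j).

(* virt(j,i) = h(j)+i for i < len(seq(j)), infinity (None) otherwise *)
Definition virt (j : Job) (i : nat) : option nat :=
  if i < size (sq j) then Some (hj j + i) else None.

Definition D : nat := \max_(j : Job) size (sq j).

Definition que (pos : Job -> nat) (m : M) : {set Job} :=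
  [set j | (pos j < size (sq j)) && (nth m (sq j) (pos j) == m)].

(* Q = { j in que(m) : virt(j) = floor(t/l), state(j) = 0 };
   states are booleans, false = 0, true = 1 *)
Definition eligible (t : nat) (pos : Job -> nat) (st : Job -> bool) (m : M)
  : {set Job} :=
  [set j in que pos m | (virt j (pos j) == Some (t %/ l)) && ~~ st j].

(* One time step t (counted from the start of the subroutine), from
   positions/states (pos, st) to (pos2, st2): first the adversary advances
   jobs to padv (arbitrary nonnegative amounts, never past completion);
   then every machine m simultaneously runs GreedyWeakScheduler(m,L,l,h,t);
   w m is the (arbitrary) choice of eligible job of machine m. *)
Definition sched_step (t : nat) (pos : Job -> nat) (st : Job -> bool)
  (pos2 : Job -> nat) (st2 : Job -> bool) : Prop :=
  exists (padv : Job -> nat) (w : M -> option Job),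
    let st1 := fun j => if (t == 0) && [exists m, j \in que padv m]
                        then false else st j in
    let Q := eligible t padv st1 in
    [/\ forall j, pos j <= padv j <= size (sq j),
        forall m, 0 < #|Q m| <= l -> oapp (fun j => j \in Q m) false (w m),
        forall j, st2 j = st1 j ||
                  [exists m, [&& t %% l == 0, l < #|Q m| & j \in Q m]] &
        forall j, pos2 j = padv j +
                  [exists m, (0 < #|Q m| <= l) && (w m == Some j)]].

(* Bad pattern for M, L, l, J: sets B_{T,m} of (job, position) pairs,
   represented as sequences; global uniqueness of jobs in the disjoint
   union also makes each B_{T,m} a set. *)
Definition bad_pattern (B : 'I_(2 * L) -> M -> seq (Job * nat)) : Prop :=
  [/\ forall T m p, p \in B T m -> p.2 < size (sq p.1) /\ nth m (sq p.1) p.2 = m,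
      uniq (flatten [seq map fst (B T m) | T <- enum 'I_(2 * L), m <- enum M]),
      forall T m, size (B T m) = 0 \/ l < size (B T m) <= #|Job| &
      #|Job| < 2 * (\sum_(T : 'I_(2 * L)) \sum_(m : M) size (B T m))].

Definition pattern_occurs (B : 'I_(2 * L) -> M -> seq (Job * nat)) : Prop :=
  forall T m p, p \in B T m -> virt p.1 p.2 = Some (nat_of_ord T).

Definition hash_good : Prop :=
  ~ exists B, bad_pattern B /\ pattern_occurs B.

End Sched.

(* Main.v *)
Require Import Defs.
From mathcomp Require Import all_boot zify.
From Stdlib Require Import Lia IndefiniteDescription.
Set Implicit Arguments.
Unset Strict Implicit.
Unset Printing Implicit Defensive.

Lemma uniq_flatten_disj (K T : eqType) (ks : seq K) (f : K -> seq T) :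
  uniq ks -> (forall k, uniq (f k)) ->
  (forall k1 k2 x, x \in f k1 -> x \in f k2 -> k1 = k2) ->
  uniq (flatten (map f ks)).
Proof.
move=> Uks Uf Hd; elim: ks Uks => [|k ks IH] //= /andP [nk Uks].
rewrite cat_uniq Uf IH //= andbT; apply/hasPn => x /flattenP [s /mapP [k' k'in ->]] xk'.
apply/negP => xk; have ekk := Hd _ _ _ xk xk'; by rewrite ekk k'in in nk.
Qed.

Lemma count_card (T : finType) (a : pred T) : count a (enum T) = #|[set x | a x]|.
Proof. by rewrite -sum1_count big_enum_cond sum1dep_card. Qed.

Section Key.
Variables (M Job : finType) (c : nat) (sq : Job -> seq M)
  (ind : Job -> 'I_(#|M| ^ c)) (L l : nat)
  (h : seq M -> 'I_(#|M| ^ c) -> 'I_L).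

Lemma key_bad (key : Job -> option ('I_(2*L) * M)) (p : Job -> nat) :
  (forall j T m, key j = Some (T,m) ->
     [/\ p j < size (sq j), nth m (sq j) (p j) = m & virt sq ind h j (p j) = Some (nat_of_ord T)]) ->
  (forall T m, #|[set j | key j == Some (T,m)]| = 0 \/ l < #|[set j | key j == Some (T,m)]|) ->
  #|Job| < 2 * #|[set j | key j != None]| ->
  ~ hash_good sq ind l h.
Proof.
move=> Hk Hsz Hlt; apply; pose B := fun (T : 'I_(2*L)) (m : M) =>
  [seq (j, p j) | j <- enum Job & key j == Some (T,m)].
have sB : forall T m, size (B T m) = #|[set j | key j == Some (T,m)]|.
  by move=> T m; rewrite size_map size_filter count_card.
exists B; split; last first.
- move=> T m [j i] /mapP [j' ]; rewrite mem_filter => /andP [/eqP kj _] [-> ->] /=.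
  by case: (Hk _ _ _ kj).
split.
- move=> T m [j i] /mapP [j' ]; rewrite mem_filter => /andP [/eqP kj _] [-> ->] /=.
  by case: (Hk _ _ _ kj).
  have -> : [seq map fst (B T m) | T <- enum 'I_(2 * L), m <- enum M] =
            map (fun q => map fst (B q.1 q.2)) [seq (T, m) | T <- enum 'I_(2 * L), m <- enum M].
    by rewrite map_allpairs.
  apply: uniq_flatten_disj.
  + by apply: allpairs_uniq => //; [apply: enum_uniq | apply: enum_uniq | move=> [? ?] [? ?] _ _].
  + move=> [T m] /=; rewrite -map_comp map_id_in; first by apply: filter_uniq; apply: enum_uniq.
    by [].
  + move=> [T1 m1] [T2 m2] x /= /mapP [[j1 i1] /mapP [j1' ] ] .
    rewrite mem_filter => /andP [/eqP k1 _] [-> ->] -> /mapP [[j2 i2] /mapP [j2' ]].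
    rewrite mem_filter => /andP [/eqP k2 _] [-> ->] /= e.
    by move: k1; rewrite e k2 => [[-> ->]].
- move=> T m; rewrite sB; case: (Hsz T m) => H; [left | right] => //.
  by rewrite H /= max_card.
- suff -> : \sum_(T : 'I_(2 * L)) \sum_(m : M) size (B T m) = #|[set j | key j != None]| by [].
  under eq_bigr => T _ do under eq_bigr => m _ do rewrite sB -sum1dep_card big_mkcond /=.
  rewrite -sum1dep_card big_mkcond /=.
  under eq_bigr => T _ do rewrite exchange_big /=.
  rewrite exchange_big /= [RHS]big_mkcond /=. apply: eq_bigr => j _.
  case kj: (key j) => [[T0 m0]|] /=.
  + rewrite pair_big /= (bigD1 (T0, m0)) //= eqxx big1 // => [[T m]] /=.
    move=> ne; case: (Some (T0, m0) =P Some (T, m)) => // -[e1 e2].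
    by rewrite e1 e2 eqxx in ne.
  + by rewrite big1 // => T _; rewrite big1_eq.
Qed.
End Key.

Section Dyn.
Variables (M Job : finType) (c : nat) (sq : Job -> seq M)
  (ind : Job -> 'I_(#|M| ^ c)) (L l : nat)
  (h : seq M -> 'I_(#|M| ^ c) -> 'I_L).
Variables (pos : nat -> Job -> nat) (st : nat -> Job -> bool)
  (padv : nat -> Job -> nat) (w : nat -> M -> option Job).

Definition st1 t j := if (t == 0) && [exists m, j \in que sq (padv t) m] then false else st t j.
Definition Q t m := eligible sq ind l h t (padv t) (st1 t) m.
Definition fl t j := (t != 0) && st t j.
Definition ev t m j := [&& t %% l == 0, l < #|Q t m| & j \in Q t m].
Notation H j := (hj sq ind h j).

Hypothesis Hs : forall t, t < 2 * L * l ->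
  [/\ forall j, pos t j <= padv t j <= size (sq j),
      forall m, 0 < #|Q t m| <= l -> oapp (fun j => j \in Q t m) false (w t m),
      forall j, st t.+1 j = st1 t j || [exists m, ev t m j] &
      forall j, pos t.+1 j = padv t j + [exists m, (0 < #|Q t m| <= l) && (w t m == Some j)]].
Hypothesis pos0 : forall j, pos 0 j = 0.
Hypothesis lpos : 0 < l.

Lemma inQ t m j : j \in Q t m =
  [&& padv t j < size (sq j), nth m (sq j) (padv t j) == m,
      H j + padv t j == t %/ l & ~~ st1 t j].
Proof.
rewrite /Q /eligible /que !inE /virt.
by case: (padv t j < size (sq j)) => //=; rewrite andbA.
Qed.

Lemma st1E t j : padv t j < size (sq j) -> st1 t j = fl t j.
Proof.
move=> lt; rewrite /st1 /fl; case: (t =P 0) => //= t0; subst t.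
suff -> : [exists m, j \in que sq (padv 0) m] by [].
move: lt; case E: (sq j) => [|x s] // lt.
apply/existsP; exists (nth x (sq j) (padv 0 j)); rewrite /que inE E lt /=.
by rewrite (set_nth_default x) // E.
Qed.

Lemma pos_le t : t <= 2 * L * l -> forall j, pos t j <= size (sq j).
Proof.
elim: t => [|t IH] lt j; first by rewrite pos0.
have [/(_ j) /andP [_ le] _ _ /(_ j) ->] := Hs lt.
case: existsP => [[m /andP [/andP [q1 q2] /eqP wm]] | _]; last by rewrite addn0.
have [_ /(_ m) ] := Hs lt. rewrite q1 q2 wm /= => /(_ isT).
by rewrite inQ => /andP [+ _]; rewrite addn1.
Qed.


Definition S t d m := [set j | [&& pos t j < size (sq j), nth m (sq j) (pos t j) == m,
      H j + pos t j == d & ~~ fl t j]].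

Definition Inv t := (forall j, pos t j < size (sq j) -> ~~ fl t j -> t %/ l <= H j + pos t j)
   /\ (0 < t %% l -> forall m, #|S t (t %/ l) m| <= l - t %% l).

Lemma step t : t < 2 * L * l -> Inv t ->
  (forall j, pos t.+1 j < size (sq j) -> ~~ fl t.+1 j -> t %/ l <= H j + pos t.+1 j)
  /\ (forall m, #|S t.+1 (t %/ l) m| + t %% l < l).
Proof.
move=> lt [Ia Ib]; have [Hp Hw Hst Hpos] := Hs lt.
have basic : forall j, pos t.+1 j < size (sq j) -> ~~ fl t.+1 j ->
   [/\ ~~ st1 t j, ~~ [exists m, ev t m j], padv t j < size (sq j),
       t %/ l <= H j + padv t j & padv t j <= pos t.+1 j].
  move=> j lt1 nf; have := nf; rewrite /fl /= Hst negb_or => /andP [ns ne].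
  have le1 : padv t j <= pos t.+1 j by rewrite Hpos leq_addr.
  have lt2 : padv t j < size (sq j) by apply: leq_ltn_trans lt1.
  have [/andP [le0 _]] := (Hp j, 0).
  have lt3 : pos t j < size (sq j) by apply: leq_ltn_trans lt2.
  split => //; apply: (leq_trans (Ia _ lt3 _)); [by rewrite -st1E | by rewrite leq_add2l].
split.
  move=> j lt1 nf; have [_ _ _ le le2] := basic j lt1 nf.
  apply: (leq_trans le); by rewrite leq_add2l.
move=> m.
case: (set_0Vmem (S t.+1 (t %/ l) m)) => [-> | [j0 j0in]].
  by rewrite cards0 add0n ltn_pmod.
have inS : forall j, j \in S t.+1 (t %/ l) m ->
   [/\ j \in Q t m, ~~ [exists m, ev t m j] & ~~ ((0 < #|Q t m| <= l) && (w t m == Some j))].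
  move=> j; rewrite inE => /and4P [lt1 nth1 /eqP e1 nf].
  have [ns ne lt2 le1 le2] := basic j lt1 nf.
  have e2 : padv t j = pos t.+1 j by lia.
  have := Hpos j; rewrite -e2 -[X in X = _]addn0 => /eqP; rewrite eqn_add2l eq_sym eqb0.
  move=> /existsPn /(_ m) nw; split => //.
  by rewrite inQ lt2 e2 nth1 e1 eqxx ns.
have [jQ nev _] := inS j0 j0in.
have QS : #|Q t m| + t %% l <= l.
  case: (posnP (t %% l)) => [t0 | tp].
    rewrite t0 addn0; move: nev => /existsPn /(_ m); rewrite /ev t0 eqxx jQ andbT /=.
    by rewrite ltnNge negbK.
  have : #|Q t m| <= #|S t (t %/ l) m|.
    apply: subset_leq_card; apply/subsetP => j1; rewrite inQ inE => /and4P [lt1 nth1 /eqP e1 ns].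
    rewrite st1E // in ns.
    have [/andP [le0 _]] := (Hp j1, 0).
    have lt3 : pos t j1 < size (sq j1) by apply: leq_ltn_trans lt1.
    have := Ia j1 lt3 ns => le4.
    have e2 : pos t j1 = padv t j1 by lia.
    by rewrite e2 lt1 nth1 e1 eqxx ns.
  have := Ib tp m; lia.
have Qpos : 0 < #|Q t m| by apply/card_gt0P; exists j0.
have := Hw m; rewrite Qpos /=.
have Ql : #|Q t m| <= l by lia.
rewrite Ql => /(_ isT); case wm: (w t m) => [j'|] //= j'Q.
have sub : S t.+1 (t %/ l) m \subset Q t m :\ j'.
  apply/subsetP => j jin; have [jq _ nw] := inS j jin.
  rewrite in_setD1 jq andbT; move: nw; rewrite Qpos Ql wm /=.
  by apply: contra => /eqP ->.
have := subset_leq_card sub; have := cardsD1 j' (Q t m); rewrite j'Q /=; lia.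
Qed.

Lemma mod_last t : l %| t.+1 -> (t %% l).+1 = l.
Proof.
move=> d; have : l %| (t %% l).+1.
  by rewrite -(dvdn_addr _ (dvdn_mull (t %/ l) (dvdnn l))) addnS -divn_eq.
move=> /(dvdn_leq (ltn0Sn _)); have := ltn_pmod t lpos; lia.
Qed.

Lemma inv_all t : t <= 2 * L * l -> Inv t.
Proof.
elim: t => [|t IH] lt.
  split; first by move=> j _ _; rewrite div0n.
  by rewrite mod0n.
have lt' : t < 2 * L * l by [].
have [Sa Sb] := step lt' (IH (ltnW lt')).
rewrite /Inv modnS divnS //.
case: ifP => dv /=.
  split => // j lt1 nf; have := Sa j lt1 nf; rewrite add1n leq_eqVlt => /orP [/eqP e|] //.
  have [x _] : exists x : M, True.
    have : 0 < size (sq j) by apply: leq_ltn_trans lt1.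
    by case: (sq j) => [|x _] //; exists x.
  have := Sb (nth x (sq j) (pos t.+1 j)).
  have := mod_last dv.
  have : j \in S t.+1 (t %/ l) (nth x (sq j) (pos t.+1 j)).
    by rewrite inE lt1 /= -e eqxx nf (set_nth_default x) // eqxx.
  move=> jin; have : 0 < #|S t.+1 (t %/ l) (nth x (sq j) (pos t.+1 j))| by apply/card_gt0P; exists j.
  lia.
rewrite add0n; split; first by apply: Sa.
move=> _ m; have := Sb m; lia.
Qed.

Lemma fl_event t : t <= 2 * L * l -> forall j, fl t j -> pos t j < size (sq j) ->
  exists t', t' < t /\ exists m, ev t' m j.
Proof.
elim: t => [|t IH] lt j //.
have lt' : t < 2 * L * l by [].
have [Hp _ Hst Hpos] := Hs lt'.
move=> f lt1; have lt2 : padv t j < size (sq j).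
  by apply: leq_ltn_trans lt1; rewrite Hpos leq_addr.
move: f; rewrite /fl /= Hst st1E // => /orP [f | /existsP [m e]].
  have lt3 : pos t j < size (sq j) by have /andP [le _] := Hp j; apply: leq_ltn_trans lt2.
  have [t' [lt4 ex]] := IH (ltnW lt') j f lt3; exists t'; split => //; exact: ltnW.
by exists t; split => //; exists m.
Qed.

Lemma st1_nz t j : t != 0 -> st1 t j = st t j.
Proof. by rewrite /st1 => /negbTE ->. Qed.

Lemma st_mono t1 m j : t1 < 2 * L * l -> ev t1 m j ->
  forall d, t1 + d < 2 * L * l -> st (t1 + d).+1 j.
Proof.
move=> lt e; elim => [|d IH] lt2.
  have [_ _ Hst _] := Hs lt; rewrite addn0 Hst; apply/orP; right; apply/existsP; by exists m.
have [_ _ Hst _] := Hs lt2; rewrite Hst st1_nz ?addnS //.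
by rewrite IH // -addnS (leq_trans _ lt2) // ltnS leq_addr.
Qed.

Lemma ev_uniq t1 t2 m1 m2 j : t1 < 2 * L * l -> t2 < 2 * L * l ->
  ev t1 m1 j -> ev t2 m2 j -> t1 = t2 /\ m1 = m2.
Proof.
have key : forall t1 t2 m1 m2, t1 < 2 * L * l -> t2 < 2 * L * l ->
  ev t1 m1 j -> ev t2 m2 j -> t1 < t2 -> False.
  move=> a b ma mb la lb ea eb ab.
  have := st_mono la ea (d := (b - a).-1); rewrite -addnS prednK ?subn_gt0 // subnKC ?(ltnW ab) //.
  move=> /(_ (ltnW lb)); move: eb; rewrite /ev inQ st1_nz => [/and3P [_ _ /and4P [_ _ _ ]] | ].
    by move=> /negP.
  by rewrite -lt0n (leq_ltn_trans _ ab).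
move=> la lb ea eb.
case: (ltngtP t1 t2) => [ab | ba | e].
- by case: (key _ _ _ _ la lb ea eb ab).
- by case: (key _ _ _ _ lb la eb ea ba).
split => //; subst t2.
move: ea eb; rewrite /ev !inQ => /and3P [_ _ /and4P [lt1 n1 _ _]] /and3P [_ _ /and4P [_ n2 _ _]].
move/eqP: n1 => n1; move/eqP: n2 => n2.
by rewrite -n1 -n2 (set_nth_default m1).
Qed.

End Dyn.
Definition sbody (M Job : finType) (c : nat) (sq : Job -> seq M)
  (ind : Job -> 'I_(#|M| ^ c)) (L l : nat)
  (h : seq M -> 'I_(#|M| ^ c) -> 'I_L) (t : nat) (pos : Job -> nat) (st : Job -> bool)
  (pos2 : Job -> nat) (st2 : Job -> bool) (padv : Job -> nat) (w : M -> option Job) : Prop :=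
    let st1 := fun j => if (t == 0) && [exists m, j \in que sq padv m]
                        then false else st j in
    let Q := eligible sq ind l h t padv st1 in
    [/\ forall j, pos j <= padv j <= size (sq j),
        forall m, 0 < #|Q m| <= l -> oapp (fun j => j \in Q m) false (w m),
        forall j, st2 j = st1 j ||
                  [exists m, [&& t %% l == 0, l < #|Q m| & j \in Q m]] &
        forall j, pos2 j = padv j +
                  [exists m, (0 < #|Q m| <= l) && (w m == Some j)]].

Unset Implicit Arguments.
Theorem lemma5p12 (M Job : finType) (c : nat) (sq : Job -> seq M)
  (ind : Job -> 'I_(#|M| ^ c)) (L l : nat)
  (h : seq M -> 'I_(#|M| ^ c) -> 'I_L) :
  injective ind ->
  D sq <= L ->
  hash_good sq ind l h ->
  forall (pos : nat -> Job -> nat) (st : nat -> Job -> bool),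
    (forall j, pos 0 j = 0) ->
    (forall t, t < 2 * L * l ->
       sched_step sq ind l h t (pos t) (st t) (pos t.+1) (st t.+1)) ->
    #|Job| <= 2 * #|[set j | pos (2 * L * l) j == size (sq j)]|.
Proof.
move=> _ HD Hgood pos st pos0 Hstep.
rewrite leqNgt; apply/negP => Hlt.
have Cc := cardsC [set j | pos (2 * L * l) j == size (sq j)].
case: (posnP L) => [L0 | Lp].
  have : #|Job| = 0 by apply: eq_card0 => j; case: (h (sq j) (ind j)) => m; rewrite L0.
  lia.
have hjL : forall j, hj sq ind h j < L by move=> j; rewrite /hj.
case: (posnP l) => [l0 | lp].
  move: Hlt Cc; rewrite l0 muln0 => Hlt Cc.
  apply: (key_bad (key := fun j => if sq j is x :: _ then
           Some (widen_ord (leq_pmull L (isT : 0 < 2)) (h (sq j) (ind j)), x) else None)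
           (p := fun _ => 0)) Hgood.
  - move=> j T m; rewrite /virt /hj; case: (sq j) => [|x s] //= [<- <-] /=.
    by rewrite addn0.
  - by move=> T m; rewrite l0; case: posnP => ?; [left | right].
  - apply: (@leq_trans (2 * #|~: [set j | pos 0 j == size (sq j)]|)); first lia.
    rewrite leq_mul2l /=; apply: subset_leq_card; apply/subsetP => j; rewrite !inE pos0.
    by case: (sq j).
have Hc : forall t, exists pw : (Job -> nat) * (M -> option Job),
    t < 2 * L * l -> sbody sq ind l h t (pos t) (st t) (pos t.+1) (st t.+1) pw.1 pw.2.
  move=> t; case: (ltnP t (2 * L * l)) => Ht.
    by have [padv [w Hb]] := Hstep t Ht; exists (padv, w).
  by exists ((fun _ => 0), (fun _ => None)) .
pose f t := proj1_sig (constructive_indefinite_description _ (Hc t)).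
pose padv t := (f t).1. pose w t := (f t).2.
have Hs : forall t, t < 2 * L * l ->
  [/\ forall j, pos t j <= padv t j <= size (sq j),
      forall m, 0 < #|Q sq ind l h st padv t m| <= l -> oapp (fun j => j \in Q sq ind l h st padv t m) false (w t m),
      forall j, st t.+1 j = st1 sq st padv t j || [exists m, ev sq ind l h st padv t m j] &
      forall j, pos t.+1 j = padv t j + [exists m, (0 < #|Q sq ind l h st padv t m| <= l) && (w t m == Some j)]].
  move=> t Ht; exact: (proj2_sig (constructive_indefinite_description _ (Hc t)) Ht).
have unc : forall j, pos (2 * L * l) j != size (sq j) ->
    exists t', t' < 2 * L * l /\ exists m, ev sq ind l h st padv t' m j.
  move=> j ne.
  have lt : pos (2 * L * l) j < size (sq j).
    by rewrite ltn_neqAle ne (pos_le Hs pos0 (leqnn _)).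
  case: (boolP (fl st (2 * L * l) j)) => fj.
    exact: (fl_event Hs (leqnn _) fj lt).
  have [Ia _] := inv_all Hs lp (leqnn (2 * L * l)).
  have := Ia j lt fj; rewrite mulnK //.
  have := hjL j; have : size (sq j) <= L.
    apply: leq_trans HD; rewrite /D; exact: leq_bigmax.
  move=> h1 h2 h3; exfalso; lia.
pose key j := [pick q : 'I_(2*L) * M | ev sq ind l h st padv (q.1 * l) q.2 j].
have TlN : forall T : 'I_(2*L), T * l < 2 * L * l by move=> T; rewrite ltn_pmul2r.
have keyE : forall j T m, (key j == Some (T,m)) = ev sq ind l h st padv (T * l) m j.
  move=> j T m; rewrite /key; case: pickP => [q eq | none].
    apply/eqP/idP => [[qe] | e]; first by move: eq; rewrite qe.
    have [e1 e2] := ev_uniq Hs (TlN q.1) (TlN T) eq e.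
    move: e1 => /eqP; rewrite eqn_pmul2r // => /eqP e1.
    by case: q eq e1 e2 => [q1 q2] /= _ e1 e2; rewrite e2 (val_inj e1).
  by have := none (T, m) => /= ->.
apply: (key_bad (key:=key) (p:=fun j => if key j is Some q then padv (q.1 * l) j else 0)) Hgood.
- move=> j T m kj; have : ev sq ind l h st padv (T * l) m j by rewrite -keyE kj eqxx.
  rewrite kj /= /ev inQ => /and3P [_ _ /and4P [lt nth1 hh _]].
  rewrite mulnK // in hh; split => //; first exact/eqP.
  by rewrite /virt lt (eqP hh).
- move=> T m.
  have -> : [set j | key j == Some (T,m)] = [set j | ev sq ind l h st padv (T * l) m j].
    by apply/setP => j; rewrite !inE keyE.
  case: (ltnP l #|Q sq ind l h st padv (T * l) m|) => Hq.
    right; suff -> : [set j | ev sq ind l h st padv (T * l) m j] = Q sq ind l h st padv (T * l) m by [].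
    by apply/setP => j; rewrite inE /ev Hq modnMl eqxx.
  left; apply: eq_card0 => j; rewrite !inE /ev.
  by rewrite ltnNge Hq /= andbF.
- apply: (@leq_trans (2 * #|~: [set j | pos (2 * L * l) j == size (sq j)]|)); first lia.
  rewrite leq_mul2l /=; apply: subset_leq_card; apply/subsetP => j; rewrite !inE => ne.
  have [t' [lt' [m e]]] := unc j ne.
  rewrite /key; case: pickP => // none.
  have Tl : t' %/ l < 2 * L by rewrite ltn_divLR.
  have := none (Ordinal Tl, m); rewrite /= divnK //.
  - by rewrite e.
  - by move: e; rewrite /ev => /and3P [].
Qed.
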